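(* Let $a_1,\ldots,a_k$ be positive integers, $A=\sum_{j=1}^k a_j$, $n=k+3$, and $v=[4A+2;\,8a_1,\ldots,8a_k,\,1,\,1,\,1]$ (players $1,\ldots,n$). Let $v_{\&\{n-1,n\}}$ be the game in which players $n-1$ and $n$ merge into one player $\&\{n-1,n\}$ of weight $2$. Then $\beta_{\&\{n-1,n\}}(v_{\&\{n-1,n\}})>\beta_{n-1}(v)+\beta_n(v)$ if and only if there is a set $P\subseteq\{1,\ldots,k\}$ with $\sum_{j\in P}a_j=\sum_{j\notin P}a_j$.
   Context: A weighted voting game $[q;w_1,\ldots,w_n]$ has players $1,\ldots,n$ with nonnegative weights $w_j$ and quota $q$, $0<q\le\sum_jw_j$; a coalition $S$ is winning iff $\sum_{j\in S}w_j\ge q$. Player $j$ is critical in $S$ if $S$ is winning and $S\setminus\{j\}$ is losing; $\eta_j$ is the number of coalitions in which $j$ is critical, and the Banzhaf index is $\beta_j=\eta_j/\sum_k\eta_k$. Merging a set $T$ of players yields the WVG with the same quota in which the players of $T$ are replaced by a single player $\&T$ of weight $\sum_{j\in T}w_j$. *)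

(* Defs.v *)
From HB Require Import structures.
From mathcomp Require Import all_boot all_order all_algebra.
Set Implicit Arguments. Unset Strict Implicit. Unset Printing Implicit Defensive.
Import Order.TTheory GRing.Theory Num.Theory.

Definition winning (I : finType) (q : nat) (w : I -> nat) (S : {set I}) : bool :=
  q <= \sum_(j in S) w j.

Definition critical (I : finType) (q : nat) (w : I -> nat) (j : I) (S : {set I}) : bool :=
  [&& j \in S, winning q w S & ~~ winning q w (S :\ j)].

Definition eta (I : finType) (q : nat) (w : I -> nat) (j : I) : nat :=
  #|[set S : {set I} | critical q w j S]|.

Definition banzhaf (I : finType) (q : nat) (w : I -> nat) (j : I) : rat :=
  ((eta q w j)%:R / (\sum_(k : I) eta q w k)%:R)%R.

(* Merging a set T of players: the new player set consists of the players
   outside T (Some x) together with the single merged player &T (None),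
   whose weight is the total weight of T.  The quota is unchanged. *)
Definition merged_player (I : finType) (T : {set I}) : finType :=
  option {x : I | x \notin T}.

Definition merge_weights (I : finType) (w : I -> nat) (T : {set I})
    (p : merged_player T) : nat :=
  match p with
  | None => \sum_(j in T) w j
  | Some x => w (val x)
  end.

(* The game v = [4A+2; 8a_1, ..., 8a_k, 1, 1, 1], players 0..k+2 (0-based). *)
Definition v_weights (k : nat) (a : 'I_k -> nat) (i : 'I_k.+3) : nat :=
  match ltnP i k with
  | LtnNotGeq Hi => 8 * a (Ordinal Hi)
  | _ => 1
  end.

Definition v_quota (k : nat) (a : 'I_k -> nat) : nat :=
  4 * (\sum_(j < k) a j) + 2.

Arguments merge_weights {I} w T p.

(* Main.v *)
Require Import Defs.
From HB Require Import structures.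
From mathcomp Require Import all_boot all_order all_algebra.
From Stdlib Require Import Lia Psatz.
Import Order.TTheory GRing.Theory Num.Theory.

Ltac tolia := repeat match goal with
  | H : is_true (_ <= _) |- _ => move/ssrnat.leP in H
  | H : is_true (_ < _) |- _ => move/ssrnat.ltP in H
  | H : is_true (~~ (_ <= _)) |- _ => rewrite -ltnNge in H
  | H : is_true (~~ (_ < _)) |- _ => rewrite -leqNgt in H
  | H : is_true (_ == _) |- _ => move/eqP in H
  | |- is_true (_ <= _) => apply/ssrnat.leP
  | |- is_true (_ < _) => apply/ssrnat.ltP
  | |- is_true (_ == _) => apply/eqP
  end; unfold addn, muln, subn in *; lia.

Lemma sum_sig (I : finType) (P : pred I) (F : I -> nat) :
  \sum_(u : {x : I | P x}) F (val u) = \sum_(i | P i) F i.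
Proof.
symmetry.
rewrite (reindex_omap (val : {x : I | P x} -> I) insub) /=; last first.
  by move=> i Pi; rewrite insubT.
apply: eq_bigl=> -[i iA]/=; rewrite insubT /= iA; apply/eqP; congr Some; exact: val_inj.
Qed.

Lemma sum_option (U : finType) (F : option U -> nat) :
  \sum_p F p = F None + \sum_u F (Some u).
Proof.
rewrite (bigD1 None) //=; congr (_ + _).
rewrite (reindex_omap (@Some U) id) /=; last by case.
by apply: eq_bigl => u; rewrite eqxx.
Qed.

Lemma crit_alt (I : finType) q (w : I -> nat) j S :
  critical q w j S = [&& j \in S, q <= \sum_(i in S) w i & \sum_(i in S) w i < q + w j].
Proof.
rewrite /critical /winning; case jS: (j \in S) => //=.
rewrite (big_setD1 j jS) /= -ltnNge.
by rewrite [w j + _]addnC ltn_add2r.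
Qed.

Lemma sum_ord3 k (F : 'I_k.+3 -> nat) :
  \sum_i F i = \sum_(j < k) F (inord j) + F (inord k) + F (inord k.+1) + F (inord k.+2).
Proof.
rewrite (eq_bigr (fun i : 'I_k.+3 => F (inord (val i)))); last by move=> i _; rewrite inord_val.
have -> : \sum_(i < k.+3) F (inord i) = \sum_(0 <= i < k.+3) F (inord i) by rewrite big_mkord.
rewrite big_nat_recr // big_nat_recr // big_nat_recr //=.
by rewrite big_mkord.
Qed.

Lemma inordK3 k m : m < k.+3 -> val (inord m : 'I_k.+3) = m.
Proof. exact: inordK. Qed.

Lemma inord_eq3 k m n : m < k.+3 -> n < k.+3 ->
  ((inord m : 'I_k.+3) == inord n) = (m == n).
Proof. by move=> hm hn; rewrite -val_eqE /= !inordK. Qed.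

Lemma vw_big k (a : 'I_k -> nat) (j : 'I_k) : v_weights a (inord j) = 8 * a j.
Proof.
have hj : (j : nat) < k.+3 by move: (ltn_ord j) => Hj; tolia.
rewrite /v_weights; case: ltnP => H.
  by do 2 f_equal; apply: val_inj; rewrite /= inordK.
by exfalso; move: H; rewrite inordK // leqNgt ltn_ord.
Qed.

Lemma vw_small k (a : 'I_k -> nat) m : k <= m < k.+3 -> v_weights a (inord m) = 1.
Proof.
move=> /andP[h1 h2]; rewrite /v_weights; case: ltnP => H //.
by exfalso; move: H; rewrite inordK // ltnNge h1.
Qed.

Lemma ik0 k : (inord k : 'I_k.+3) = k :> nat.
Proof. by rewrite inordK //; tolia. Qed.
Lemma ik1 k : (inord k.+1 : 'I_k.+3) = k.+1 :> nat.
Proof. by rewrite inordK //; tolia. Qed.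
Lemma ik2 k : (inord k.+2 : 'I_k.+3) = k.+2 :> nat.
Proof. by rewrite inordK //; tolia. Qed.
Lemma ikj k (j : 'I_k) : (inord j : 'I_k.+3) = j :> nat.
Proof. by rewrite inordK //; move: (ltn_ord j) => Hj; tolia. Qed.


Lemma ord3_cases k (i : 'I_k.+3) :
  (exists j : 'I_k, i = inord j) \/ i = inord k \/ i = inord k.+1 \/ i = inord k.+2.
Proof.
case: (ltnP i k) => h.
  by left; exists (Ordinal h); apply: val_inj; rewrite /= inordK //; tolia.
right; have hi := ltn_ord i.
have : (i : nat) = k \/ (i : nat) = k.+1 \/ (i : nat) = k.+2 by tolia.
case=> [E|[E|E]]; [left|right;left|right;right]; apply: val_inj; rewrite /= inordK; first exact E; tolia.
Qed.

Definition toV k (B : {set 'I_k}) (b0 b1 b2 : bool) : {set 'I_k.+3} :=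
  [set i : 'I_k.+3 | if (i : nat) < k then [exists j in B, (j : nat) == i]
     else if (i : nat) == k then b0 else if (i : nat) == k.+1 then b1 else b2].

Arguments toV {k} B b0 b1 b2.

Lemma ltk3 k (j : 'I_k) : (j : nat) < k.+3.
Proof. by move: (ltn_ord j) => Hj; tolia. Qed.

Lemma mem_toV_big k (B : {set 'I_k}) b0 b1 b2 (j : 'I_k) : (inord j \in toV B b0 b1 b2) = (j \in B).
Proof.
rewrite inE ikj ltn_ord.
apply/existsP/idP => [[j' /andP[H /eqP E]] | H]; last by exists j; rewrite H eqxx.
by have -> : j = j' by apply: val_inj.
Qed.

Lemma mem_toV_0 k (B : {set 'I_k}) b0 b1 b2 : (inord k \in toV B b0 b1 b2) = b0.
Proof. by rewrite inE ik0 ltnn eqxx. Qed.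

Lemma mem_toV_1 k (B : {set 'I_k}) b0 b1 b2 : (inord k.+1 \in toV B b0 b1 b2) = b1.
Proof.
rewrite inE ik1.
have -> : (k.+1 < k) = false by apply/negbTE; rewrite -leqNgt; tolia.
have -> : (k.+1 == k) = false by apply/negbTE; apply/eqP; tolia.
by rewrite eqxx.
Qed.

Lemma mem_toV_2 k (B : {set 'I_k}) b0 b1 b2 : (inord k.+2 \in toV B b0 b1 b2) = b2.
Proof.
rewrite inE ik2.
have -> : (k.+2 < k) = false by apply/negbTE; rewrite -leqNgt; tolia.
have -> : (k.+2 == k) = false by apply/negbTE; apply/eqP; tolia.
have -> : (k.+2 == k.+1) = false by apply/negbTE; apply/eqP; tolia.
by [].
Qed.

Lemma sum_setV k (G : {set 'I_k.+3} -> nat) :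
  \sum_S G S = \sum_(B : {set 'I_k}) \sum_(b0 : bool) \sum_(b1 : bool) \sum_(b2 : bool)
      G (toV B b0 b1 b2).
Proof.
rewrite (reindex (fun p : {set 'I_k} * bool * bool * bool => toV p.1.1.1 p.1.1.2 p.1.2 p.2)) /=.
  rewrite -[LHS](pair_bigA _ (fun x b2 => G (toV x.1.1 x.1.2 x.2 b2))) /=.
  rewrite -[LHS](pair_bigA _ (fun x b1 => \sum_b2 G (toV x.1 x.2 b1 b2))) /=.
  by rewrite -[LHS](pair_bigA _ (fun B b0 => \sum_b1 \sum_b2 G (toV B b0 b1 b2))) /=.
exists (fun S : {set 'I_k.+3} => ([set j : 'I_k | (inord j : 'I_k.+3) \in S],
   (inord k : 'I_k.+3) \in S, (inord k.+1 : 'I_k.+3) \in S, (inord k.+2 : 'I_k.+3) \in S)).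
  move=> [[[B b0] b1] b2] _ /=; rewrite mem_toV_0 mem_toV_1 mem_toV_2.
  congr (_, _, _, _); apply/setP => j; by rewrite inE mem_toV_big.
move=> S _ /=; apply/setP => i.
have [[j ->]|[->|[->|->]]] := ord3_cases _ i.
- by rewrite mem_toV_big inE.
- by rewrite mem_toV_0.
- by rewrite mem_toV_1.
- by rewrite mem_toV_2.
Qed.


Lemma vw0 k (a : 'I_k -> nat) : v_weights a (inord k) = 1.
Proof. by apply: vw_small; apply/andP; split; tolia. Qed.
Lemma vw1 k (a : 'I_k -> nat) : v_weights a (inord k.+1) = 1.
Proof. by apply: vw_small; apply/andP; split; tolia. Qed.
Lemma vw2 k (a : 'I_k -> nat) : v_weights a (inord k.+2) = 1.
Proof. by apply: vw_small; apply/andP; split; tolia. Qed.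

Lemma sumw_toV k (a : 'I_k -> nat) (B : {set 'I_k}) (b0 b1 b2 : bool) :
  \sum_(i in toV B b0 b1 b2) v_weights a i = 8 * \sum_(j in B) a j + b0 + b1 + b2.
Proof.
rewrite big_mkcond sum_ord3 mem_toV_0 mem_toV_1 mem_toV_2 vw0 vw1 vw2.
congr (_ + _ + _ + _).
rewrite big_distrr /= [RHS]big_mkcond; apply: eq_bigr => j _.
by rewrite mem_toV_big vw_big; case: (j \in B).
Qed.

Lemma card_set_sum (T : finType) (P : pred T) : #|[set x | P x]| = \sum_x (P x : nat).
Proof.
rewrite -sum1_card big_mkcond /=; apply: eq_bigr => x _; rewrite inE; by case: (P x).
Qed.

Definition Tk k : {set 'I_k.+3} := [set (inord k.+1 : 'I_k.+3); inord k.+2].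
Definition MP k := merged_player (Tk k).

Definition contract k (S : {set 'I_k.+3}) : {set MP k} :=
  [set p : MP k | match p with None => (inord k.+1 : 'I_k.+3) \in S | Some u => val u \in S end].
Definition expand k (S' : {set MP k}) : {set 'I_k.+3} :=
  [set i | match (insub i : option {x : 'I_k.+3 | x \notin Tk k}) with
           Some u => Some u \in S' | None => None \in S' end].
Arguments contract {k} S.
Arguments expand {k} S'.

Lemma Tk_j k (j : 'I_k) : (inord j : 'I_k.+3) \in Tk k = false.
Proof.
rewrite !inE -!val_eqE /= ikj ik1 ik2; move: (ltn_ord j) => Hj.
apply/negbTE; rewrite negb_or; apply/andP; split; apply/eqP; tolia.
Qed.
Lemma Tk_0 k : (inord k : 'I_k.+3) \in Tk k = false.
Proof.
rewrite !inE -!val_eqE /= ik0 ik1 ik2.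
apply/negbTE; rewrite negb_or; apply/andP; split; apply/eqP; tolia.
Qed.
Lemma Tk_1 k : (inord k.+1 : 'I_k.+3) \in Tk k.
Proof. by rewrite !inE eqxx. Qed.
Lemma Tk_2 k : (inord k.+2 : 'I_k.+3) \in Tk k.
Proof. by rewrite !inE eqxx orbT. Qed.

Lemma contract_expand k (S' : {set MP k}) : contract (expand S') = S'.
Proof.
apply/setP => -[u|]; rewrite !inE.
  by rewrite valK.
by rewrite insubN // negbK Tk_1.
Qed.

Lemma mem_expand_contract k (S : {set 'I_k.+3}) i :
  (i \in expand (contract S)) = if i \in Tk k then (inord k.+1 : 'I_k.+3) \in S else i \in S.
Proof.
rewrite inE; case: insubP => [u Pu Eu | nP].
  by rewrite inE Eu (negbTE Pu).
by rewrite inE; move: nP; rewrite negbK => ->.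
Qed.

Lemma expand_contract_toV k (B : {set 'I_k}) b0 b1 b2 :
  (expand (contract (toV B b0 b1 b2)) == toV B b0 b1 b2) = (b1 == b2).
Proof.
have -> : expand (contract (toV B b0 b1 b2)) = toV B b0 b1 b1.
  apply/setP => i; rewrite mem_expand_contract.
  have [[j ->]|[->|[->|->]]] := ord3_cases _ i.
  - by rewrite Tk_j !mem_toV_big.
  - by rewrite Tk_0 !mem_toV_0.
  - by rewrite Tk_1 !mem_toV_1.
  - by rewrite Tk_2 !mem_toV_1 mem_toV_2.
apply/eqP/eqP => [E|->] //.
by move: (mem_toV_2 _ B b0 b1 b1); rewrite E mem_toV_2.
Qed.

Lemma sum_setM k (G : {set MP k} -> nat) :
  \sum_S' G S' = \sum_(B : {set 'I_k}) \sum_(b0 : bool) \sum_(b1 : bool)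
      G (contract (toV B b0 b1 b1)).
Proof.
rewrite (reindex_onto (@contract k) (@expand k)); last by move=> S' _; rewrite contract_expand.
rewrite big_mkcond sum_setV /=.
apply: eq_bigr => B _; apply: eq_bigr => b0 _; apply: eq_bigr => b1 _.
rewrite big_bool !expand_contract_toV.
by case: b1 => /=; rewrite ?addn0 ?add0n.
Qed.

Lemma mw_None k (a : 'I_k -> nat) : merge_weights (v_weights a) (Tk k) None = 2.
Proof.
rewrite /= big_mkcond sum_ord3 Tk_0 Tk_1 Tk_2 vw1 vw2 /=.
rewrite big1 // => j _; by rewrite Tk_j.
Qed.

Lemma sumw_contract k (a : 'I_k -> nat) (B : {set 'I_k}) (b0 b1 : bool) :
  \sum_(p in contract (toV B b0 b1 b1)) merge_weights (v_weights a) (Tk k) p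
   = 8 * \sum_(j in B) a j + b0 + b1 + b1.
Proof.
rewrite big_mkcond sum_option inE mw_None mem_toV_1.
rewrite (eq_bigr (fun u : {x : 'I_k.+3 | x \notin Tk k} =>
   (fun i => if i \in toV B b0 b1 b1 then v_weights a i else 0) (val u))); last first.
  by move=> u _; rewrite inE.
rewrite (@sum_sig _ (fun x => x \notin Tk k) (fun i => if i \in toV B b0 b1 b1 then v_weights a i else 0)).
rewrite big_mkcond sum_ord3 Tk_0 Tk_1 Tk_2 /= mem_toV_0 vw0.
have -> : \sum_(j < k)
      (if (inord j : 'I_k.+3) \notin Tk k
       then if (inord j : 'I_k.+3) \in toV B b0 b1 b1 then v_weights a (inord j) else 0
       else 0) = 8 * \sum_(j in B) a j.
  rewrite big_distrr /= [RHS]big_mkcond; apply: eq_bigr => j _.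
  by rewrite Tk_j mem_toV_big vw_big; case: (j \in B).
case: b0; case: b1 => /=; tolia.
Qed.


Ltac decide_atoms :=
  repeat match goal with
  | |- context [?m <= ?n] =>
      (have -> : (m <= n) = true by change (is_true (m <= n)); tolia) ||
      (have -> : (m <= n) = false by apply/negbTE; rewrite -ltnNge; tolia)
  | |- context [?m == ?n :> nat] =>
      (have -> : (m == n) = true by change (is_true (m == n)); tolia) ||
      (have -> : (m == n) = false by apply/negbTE; apply/eqP; tolia)
  end.

Lemma region s A : [\/ 8 * s + 4 <= 4 * A, 8 * s = 4 * A | 4 * A + 4 <= 8 * s].
Proof.
have : (8 * s + 4 <= 4 * A)%coq_nat \/ 8 * s = 4 * A \/ (4 * A + 4 <= 8 * s)%coq_nat.
  unfold addn, muln; lia.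
case=> [/ssrnat.leP H|[H|/ssrnat.leP H]]; by [apply: Or31|apply: Or32|apply: Or33].
Qed.

Lemma pb_y s A :
  \sum_(b0 : bool) \sum_(b1 : bool) \sum_(b2 : bool)
    [&& b1, 4 * A + 2 <= 8 * s + b0 + b1 + b2 & 8 * s + b0 + b1 + b2 < 4 * A + 2 + 1]
  = 2 * (8 * s == 4 * A).
Proof.
rewrite !big_bool /=.
by case: (region s A) => H; decide_atoms.
Qed.

Lemma region2 s A c : [\/ 8 * s + 4 <= 4 * A + 8 * c, 8 * s = 4 * A + 8 * c | 4 * A + 8 * c + 4 <= 8 * s].
Proof.
have : (8 * s + 4 <= 4 * A + 8 * c)%coq_nat \/ 8 * s = 4 * A + 8 * c \/ (4 * A + 8 * c + 4 <= 8 * s)%coq_nat.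
  unfold addn, muln; lia.
case=> [/ssrnat.leP H|[H|/ssrnat.leP H]]; by [apply: Or31|apply: Or32|apply: Or33].
Qed.

Lemma pb_x s A :
  \sum_(b0 : bool) \sum_(b1 : bool) \sum_(b2 : bool)
    [&& b0, 4 * A + 2 <= 8 * s + b0 + b1 + b2 & 8 * s + b0 + b1 + b2 < 4 * A + 2 + 1]
  = 2 * (8 * s == 4 * A).
Proof. rewrite !big_bool /=. by case: (region s A) => H; decide_atoms. Qed.

Lemma pb_z s A :
  \sum_(b0 : bool) \sum_(b1 : bool) \sum_(b2 : bool)
    [&& b2, 4 * A + 2 <= 8 * s + b0 + b1 + b2 & 8 * s + b0 + b1 + b2 < 4 * A + 2 + 1]
  = 2 * (8 * s == 4 * A).
Proof. rewrite !big_bool /=. by case: (region s A) => H; decide_atoms. Qed.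

Lemma pb_M s A :
  \sum_(b0 : bool) \sum_(b1 : bool)
    [&& b1, 4 * A + 2 <= 8 * s + b0 + b1 + b1 & 8 * s + b0 + b1 + b1 < 4 * A + 2 + 2]
  = 2 * (8 * s == 4 * A).
Proof. rewrite !big_bool /=. by case: (region s A) => H; decide_atoms. Qed.

Lemma pb_Mx s A :
  \sum_(b0 : bool) \sum_(b1 : bool)
    [&& b0, 4 * A + 2 <= 8 * s + b0 + b1 + b1 & 8 * s + b0 + b1 + b1 < 4 * A + 2 + 1]
  = 0.
Proof. rewrite !big_bool /=. by case: (region s A) => H; decide_atoms. Qed.

Lemma pb_big (bb : bool) s A c :
  \sum_(b0 : bool) \sum_(b1 : bool) \sum_(b2 : bool)
    [&& bb, 4 * A + 2 <= 8 * s + b0 + b1 + b2 & 8 * s + b0 + b1 + b2 < 4 * A + 2 + 8 * c]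
  = 2 * \sum_(b0 : bool) \sum_(b1 : bool)
    [&& bb, 4 * A + 2 <= 8 * s + b0 + b1 + b1 & 8 * s + b0 + b1 + b1 < 4 * A + 2 + 8 * c].
Proof.
case: bb; rewrite !big_bool /=; last by [].
by case: (region s A) => H; case: (region2 s A c) => H'; decide_atoms.
Qed.


Definition sB k (a : 'I_k -> nat) (B : {set 'I_k}) := \sum_(j in B) a j.
Arguments sB {k} a B.

Lemma eta_vj k (a : 'I_k -> nat) (j : 'I_k) :
  Defs.eta (v_quota a) (v_weights a) (inord j) =
  \sum_(B : {set 'I_k}) \sum_(b0 : bool) \sum_(b1 : bool) \sum_(b2 : bool)
    [&& j \in B, v_quota a <= 8 * sB a B + b0 + b1 + b2
      & 8 * sB a B + b0 + b1 + b2 < v_quota a + 8 * a j].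
Proof.
rewrite /Defs.eta card_set_sum sum_setV; do 4 (apply: eq_bigr => ? _).
by rewrite crit_alt sumw_toV mem_toV_big vw_big.
Qed.

Lemma eta_vx k (a : 'I_k -> nat) :
  Defs.eta (v_quota a) (v_weights a) (inord k) =
  \sum_(B : {set 'I_k}) \sum_(b0 : bool) \sum_(b1 : bool) \sum_(b2 : bool)
    [&& b0, v_quota a <= 8 * sB a B + b0 + b1 + b2
      & 8 * sB a B + b0 + b1 + b2 < v_quota a + 1].
Proof.
rewrite /Defs.eta card_set_sum sum_setV; do 4 (apply: eq_bigr => ? _).
by rewrite crit_alt sumw_toV mem_toV_0 vw0.
Qed.

Lemma eta_vy k (a : 'I_k -> nat) :
  Defs.eta (v_quota a) (v_weights a) (inord k.+1) =
  \sum_(B : {set 'I_k}) \sum_(b0 : bool) \sum_(b1 : bool) \sum_(b2 : bool)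
    [&& b1, v_quota a <= 8 * sB a B + b0 + b1 + b2
      & 8 * sB a B + b0 + b1 + b2 < v_quota a + 1].
Proof.
rewrite /Defs.eta card_set_sum sum_setV; do 4 (apply: eq_bigr => ? _).
by rewrite crit_alt sumw_toV mem_toV_1 vw1.
Qed.

Lemma eta_vz k (a : 'I_k -> nat) :
  Defs.eta (v_quota a) (v_weights a) (inord k.+2) =
  \sum_(B : {set 'I_k}) \sum_(b0 : bool) \sum_(b1 : bool) \sum_(b2 : bool)
    [&& b2, v_quota a <= 8 * sB a B + b0 + b1 + b2
      & 8 * sB a B + b0 + b1 + b2 < v_quota a + 1].
Proof.
rewrite /Defs.eta card_set_sum sum_setV; do 4 (apply: eq_bigr => ? _).
by rewrite crit_alt sumw_toV mem_toV_2 vw2.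
Qed.

Lemma eta_MN k (a : 'I_k -> nat) :
  Defs.eta (v_quota a) (merge_weights (v_weights a) (Tk k)) None =
  \sum_(B : {set 'I_k}) \sum_(b0 : bool) \sum_(b1 : bool)
    [&& b1, v_quota a <= 8 * sB a B + b0 + b1 + b1
      & 8 * sB a B + b0 + b1 + b1 < v_quota a + 2].
Proof.
rewrite /Defs.eta card_set_sum sum_setM; do 3 (apply: eq_bigr => ? _).
by rewrite crit_alt sumw_contract mw_None inE mem_toV_1.
Qed.

Definition Heta k (a : 'I_k -> nat) (i : 'I_k.+3) :=
  \sum_(B : {set 'I_k}) \sum_(b0 : bool) \sum_(b1 : bool)
    [&& i \in toV B b0 b1 b1, v_quota a <= 8 * sB a B + b0 + b1 + b1
      & 8 * sB a B + b0 + b1 + b1 < v_quota a + v_weights a i].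
Arguments Heta {k} a i.

Lemma eta_MS k (a : 'I_k -> nat) u :
  Defs.eta (v_quota a) (merge_weights (v_weights a) (Tk k)) (Some u) = Heta a (val u).
Proof.
rewrite /Defs.eta card_set_sum sum_setM; do 3 (apply: eq_bigr => ? _).
by rewrite crit_alt sumw_contract inE /=.
Qed.

Lemma Heta_j k (a : 'I_k -> nat) (j : 'I_k) :
  Heta a (inord j) =
  \sum_(B : {set 'I_k}) \sum_(b0 : bool) \sum_(b1 : bool)
    [&& j \in B, v_quota a <= 8 * sB a B + b0 + b1 + b1
      & 8 * sB a B + b0 + b1 + b1 < v_quota a + 8 * a j].
Proof.
rewrite /Heta; do 3 (apply: eq_bigr => ? _).
by rewrite mem_toV_big vw_big.
Qed.

Lemma Heta_0 k (a : 'I_k -> nat) :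
  Heta a (inord k) =
  \sum_(B : {set 'I_k}) \sum_(b0 : bool) \sum_(b1 : bool)
    [&& b0, v_quota a <= 8 * sB a B + b0 + b1 + b1
      & 8 * sB a B + b0 + b1 + b1 < v_quota a + 1].
Proof.
rewrite /Heta; do 3 (apply: eq_bigr => ? _).
by rewrite mem_toV_0 vw0.
Qed.

Lemma tot_M k (a : 'I_k -> nat) :
  \sum_(p : merged_player (Tk k)) Defs.eta (v_quota a) (merge_weights (v_weights a) (Tk k)) p =
  Defs.eta (v_quota a) (merge_weights (v_weights a) (Tk k)) None
  + (\sum_(j < k) Heta a (inord j) + Heta a (inord k)).
Proof.
rewrite sum_option; congr (_ + _).
rewrite (eq_bigr (fun u : {x : 'I_k.+3 | x \notin Tk k} => Heta a (val u))); last first.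
  by move=> u _; exact: eta_MS.
rewrite (@sum_sig _ (fun x => x \notin Tk k) (Heta a)) big_mkcond sum_ord3 Tk_0 Tk_1 Tk_2 /=.
rewrite !addn0; congr (_ + _); apply: eq_bigr => j _; by rewrite Tk_j.
Qed.

Lemma frac_lt (x y z t : nat) : 0 < y -> 0 < t ->
  ((x%:R / y%:R : rat) < z%:R / t%:R)%R = (x * t < z * y).
Proof.
move=> hy ht.
rewrite ltr_pdivrMr ?ltr0n // mulrAC ltr_pdivlMr ?ltr0n // -!natrM ltr_nat.
by [].
Qed.


Lemma NB_pos k (a : 'I_k -> nat) :
  (0 < \sum_(B : {set 'I_k}) (8 * sB a B == 4 * \sum_(j < k) a j : nat))
  <-> exists P : {set 'I_k}, \sum_(j in P) a j = \sum_(j in ~: P) a j.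
Proof.
have split_sum : forall P : {set 'I_k},
    \sum_(j < k) a j = \sum_(j in P) a j + \sum_(j in ~: P) a j.
  move=> P; rewrite (bigID (mem P)) /=; congr (_ + _); apply: eq_bigl => j; by rewrite inE.
split.
  move=> Hpos.
  have [B HB] : exists B : {set 'I_k}, 8 * sB a B == 4 * \sum_(j < k) a j.
    apply/existsP; move: Hpos; apply: contraLR; rewrite negb_exists => /forallP H.
    rewrite -leqNgt leqn0 sum_nat_eq0; apply/forallP => B; by rewrite (negbTE (H B)).
  exists B; move: HB; rewrite /sB (split_sum B) => HB; tolia.
move=> [P HP].
rewrite (bigD1 P) //=.
have -> : (8 * sB a P == 4 * \sum_(j < k) a j) = true.
  change (is_true (8 * sB a P == 4 * \sum_(j < k) a j)).
  move: HP; rewrite /sB (split_sum P) => HP; tolia.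
by [].
Qed.

Lemma main_aux (k : nat) (a : 'I_k -> nat) :
  (banzhaf (v_quota a) (merge_weights (v_weights a) (Tk k)) None >
     banzhaf (v_quota a) (v_weights a) (inord k.+1)
     + banzhaf (v_quota a) (v_weights a) (inord k.+2))%R
  <-> exists P : {set 'I_k}, \sum_(j in P) a j = \sum_(j in ~: P) a j.
Proof.
set NB := \sum_(B : {set 'I_k}) (8 * sB a B == 4 * \sum_(j < k) a j : nat).
set Y := \sum_(j < k) Heta a (inord j).
have Ex : Defs.eta (v_quota a) (v_weights a) (inord k) = 2 * NB.
  by rewrite eta_vx /NB big_distrr; apply: eq_bigr => B _; exact: pb_x.
have Ey : Defs.eta (v_quota a) (v_weights a) (inord k.+1) = 2 * NB.
  by rewrite eta_vy /NB big_distrr; apply: eq_bigr => B _; exact: pb_y.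
have Ez : Defs.eta (v_quota a) (v_weights a) (inord k.+2) = 2 * NB.
  by rewrite eta_vz /NB big_distrr; apply: eq_bigr => B _; exact: pb_z.
have EM : Defs.eta (v_quota a) (merge_weights (v_weights a) (Tk k)) None = 2 * NB.
  by rewrite eta_MN /NB big_distrr; apply: eq_bigr => B _; exact: pb_M.
have E0 : Heta a (inord k) = 0.
  by rewrite Heta_0 big1 // => B _; exact: pb_Mx.
have Eb : \sum_(j < k) Defs.eta (v_quota a) (v_weights a) (inord j) = 2 * Y.
  rewrite /Y big_distrr; apply: eq_bigr => j _.
  rewrite eta_vj Heta_j big_distrr; apply: eq_bigr => B _; exact: pb_big.
rewrite /banzhaf sum_ord3 tot_M Ex Ey Ez EM E0 Eb addn0.
rewrite -NB_pos -/NB.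
case: (posnP NB) => [->|HN].
  rewrite muln0 !mul0r addr0 ltxx; split => //.
rewrite -mulrDl -natrD frac_lt; last 2 first.
- tolia.
- tolia.
split => // _.
apply/ssrnat.ltP; unfold addn, muln in *; move/ssrnat.ltP: HN => HN; nia.
Qed.


Theorem mainTheorem7 (k : nat) (a : 'I_k -> nat) (a_pos : forall j, 0 < a j) :
  let T : {set 'I_k.+3} := [set (inord k.+1 : 'I_k.+3); inord k.+2] in
  (banzhaf (v_quota a) (merge_weights (v_weights a) T) None >
     banzhaf (v_quota a) (v_weights a) (inord k.+1)
     + banzhaf (v_quota a) (v_weights a) (inord k.+2))%R
  <-> exists P : {set 'I_k}, \sum_(j in P) a j = \sum_(j in ~: P) a j.
Proof.
intros T. exact (main_aux k a).
Qed.
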